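(* Let $\langle B,\wedge,{}'\rangle$ be an algebra with $\wedge$ binary and ${}'$ unary satisfying $x\wedge(y\wedge z)\approx (z\wedge x)\wedge y$ and $x\approx (x'\wedge y)'\wedge(x'\wedge y')'$. Then $x\wedge(y\wedge z)=y\wedge(z\wedge x)$ for all $x,y,z\in B$. *)


Theorem lemma5p25 (B : Type) (meet : B -> B -> B) (c : B -> B)
  (H1 : forall x y z : B, meet x (meet y z) = meet (meet z x) y)
  (H2 : forall x y : B, x = meet (c (meet (c x) y)) (c (meet (c x) (c y)))) :
  forall x y z : B, meet x (meet y z) = meet y (meet z x).
Proof.
  assert (P5 : forall a b c0 d e : B,
    meet a (meet b (meet c0 (meet d e))) = meet (meet b (meet c0 (meet d e))) a).
  { intros a b c0 d e.
    pose proof (H1 b c0 (meet d e)). pose proof (H1 e b d). pose proof (H1 c0 a (meet e (meet b d))). pose proof (H1 a e (meet b d)). pose proof (H1 c0 (meet (meet b d) a) e). pose proof (H1 (meet e c0) (meet b d) a). pose proof (H1 (meet a (meet e c0)) b d). pose proof (H1 d a (meet e c0)). pose proof (H1 c0 d e). pose proof (H1 a b (meet c0 (meet d e))).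
    congruence. }
  assert (D : forall v : B, exists v1 v2 v3 v4, v = meet v1 (meet v2 (meet v3 v4))).
  { intro v.
    set (q := fun w => c (meet (c w) (c w))).
    set (p := fun w => c (meet (c w) w)).
    assert (E : forall w, w = meet (p w) (q w)) by (intro w; exact (H2 w w)).
    exists (p v), (p (q v)), (p (q (q v))), (q (q (q v))).
    rewrite <- (E (q (q v))), <- (E (q v)). apply E. }
  assert (C : forall u v : B, meet u v = meet v u).
  { intros u v. destruct (D v) as [v1 [v2 [v3 [v4 ->]]]]. apply P5. }
  intros x y z. rewrite H1. apply C.
Qed.
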